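(* Let $\bar Z=\frac{1}{\sqrt2}\big(\frac{\partial}{\partial\bar w}-iw\frac{\partial}{\partial s}\big)$ on $\mathbb{C}\times\mathbb{R}\ni(w,s)$. If $p(w,\bar w,s)$ is a homogeneous polynomial of degree $k\ge2$, then there exists a homogeneous polynomial $q(w,\bar w,s)$ of degree $k+1$ such that $\bar Zq=p$ and $|\mathrm{Re}\,q(w,\bar w,s)|\le C|w|^2(|w|+|s|)$ for $|w|+|s|^{1/2}\le1$. Furthermore, the coefficients of $q$ are linear combinations of the coefficients of $p$.
   Context: A polynomial in $w,\bar w,s$ is homogeneous of degree $k$ if it is a linear combination of monomials $\bar w^\alpha w^\beta s^\gamma$ with $\alpha+\beta+2\gamma=k$. *)

(* Defs.v *)
From HB Require Import structures.
From mathcomp Require Import all_boot all_order all_algebra.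
From mathcomp Require Import complex.
From mathcomp Require Import mpoly.
Set Implicit Arguments. Unset Strict Implicit. Unset Printing Implicit Defensive.
Import Order.TTheory GRing.Theory Num.Theory.
Local Open Scope ring_scope.

(* Polynomials in the three formal variables  wbar, w, s  with complex
   coefficients in C = R[i]; variable 0 = wbar, 1 = w, 2 = s. *)
Notation pol3 R := (mpoly 3 (complex R)).

Definition iwb : 'I_3 := @Ordinal 3 0 isT.
Definition iw  : 'I_3 := @Ordinal 3 1 isT.
Definition is_ : 'I_3 := @Ordinal 3 2 isT.

Definition whomog (R : rcfType) (k : nat) (p : pol3 R) : Prop :=
  forall m, m \in msupp p -> (m iwb + m iw + 2 * m is_)%N = k.

Definition Zbar (R : rcfType) (p : pol3 R) : pol3 R :=
  ((Num.sqrt (2 : R))^-1)%:C%C *: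
    (p^`M(iwb) - ((Complex 0 1) *: 'X_iw) * p^`M(is_)).

Definition ev (R : rcfType) (w : complex R) (s : R) : 'I_3 -> complex R :=
  fun i => if i == iwb then conjc w else if i == iw then w else s%:C%C.

Notation cmod := (@ComplexField.Normc.normc _).

(* Main.v *)
Require Import Defs.
From HB Require Import structures.
From mathcomp Require Import all_boot all_order all_algebra.
From mathcomp Require Import complex.
From mathcomp Require Import mpoly.
From mathcomp Require Import zify ring.
Set Implicit Arguments. Unset Strict Implicit. Unset Printing Implicit Defensive.
Import Order.TTheory GRing.Theory Num.Theory.
Local Open Scope ring_scope.

Section S.
Variable R : rcfType.
Local Notation C := (complex R).
Local Notation P := {mpoly C[3]}.

Definition linm (F : 'X_{1..3} -> C -> P) (p : P) := \sum_(m <- msupp p) F m p@_m.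

Lemma linm_ext F (r : seq 'X_{1..3}) p : (forall m, F m 0 = 0) -> uniq r ->
  {subset msupp p <= r} -> linm F p = \sum_(m <- r) F m p@_m.
Proof.
move=> F0 ur sub; symmetry; rewrite (bigID (fun m => m \in msupp p)) /=.
rewrite [X in _ + X]big1 ?addr0; last by move=> m /memN_msupp_eq0 ->.
rewrite -big_filter; apply: perm_big; apply: uniq_perm.
- exact: filter_uniq.
- exact: msupp_uniq.
move=> m; rewrite mem_filter; apply/andP/idP => [[]//|h]; split => //; exact: sub.
Qed.

Lemma addF0 (F : 'X_{1..3} -> C -> P) : (forall m x y, F m (x+y) = F m x + F m y) ->
  forall m, F m 0 = 0.
Proof.
move=> hF m; have := hF m 0 0; rewrite addr0 => /(congr1 (fun z => z - F m 0)).
by rewrite subrr addrK.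
Qed.

Lemma linmD F : (forall m x y, F m (x+y) = F m x + F m y) ->
  forall p q, linm F (p+q) = linm F p + linm F q.
Proof.
move=> hF p q; have F0 := addF0 hF.
set r := undup (msupp p ++ msupp q ++ msupp (p+q)).
have ur : uniq r by exact: undup_uniq.
rewrite (@linm_ext F r p) // ?(@linm_ext F r q) // ?(@linm_ext F r (p+q)) //.
- by rewrite -big_split; apply: eq_bigr => m _; rewrite mcoeffD hF.
- by move=> m h; rewrite mem_undup !mem_cat h ?orbT.
- by move=> m h; rewrite mem_undup !mem_cat h ?orbT.
- by move=> m h; rewrite mem_undup !mem_cat h ?orbT.
Qed.

Lemma linmZ F c : (forall m x, F m (c * x) = c *: F m x) -> (forall m, F m 0 = 0) ->
  forall p, linm F (c *: p) = c *: linm F p.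
Proof.
move=> hF F0 p; rewrite (@linm_ext F (msupp p) (c *: p)) //; last exact: msuppZ_le.
by rewrite /linm scaler_sumr; apply: eq_bigr => m _; rewrite mcoeffZ hF.
Qed.


Lemma supp_sumX (T : eqType) (r : seq T) (c : T -> C) (f : T -> 'X_{1..3})
  (Q : pred 'X_{1..3}) :
  (forall t, t \in r -> c t != 0 -> Q (f t)) ->
  forall m, m \in msupp (\sum_(t <- r) c t *: 'X_[f t]) -> Q m.
Proof.
move=> h m /msupp_sum_le /flattenP [s /mapP [t]].
rewrite mem_filter /= => tr -> {s}.
have [->|nz] := eqVneq (c t) 0; first by rewrite scale0r msupp0.
by rewrite msuppMCX // mem_seq1 => /eqP ->; apply: h.
Qed.

Definition AF (m : 'X_{1..3}) (x : C) : P := (x / (m iwb).+1%:R) *: 'X_[m + U_(iwb)].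
Definition Aop (p : P) : P := linm AF p.

Lemma AF_add m x y : AF m (x + y) = AF m x + AF m y.
Proof. by rewrite /AF mulrDl scalerDl. Qed.

Lemma AopD p q : Aop (p + q) = Aop p + Aop q.
Proof. by apply: (@linmD AF); exact: AF_add. Qed.

Lemma AopZ c p : Aop (c *: p) = c *: Aop p.
Proof.
apply: linmZ; last exact: addF0 AF_add.
by move=> m x; rewrite /AF scalerA mulrA.
Qed.

Lemma Aop_P (Q : pred 'X_{1..3}) p :
  (forall m, m \in msupp p -> Q (m + U_(iwb))%MM) -> forall m, m \in msupp (Aop p) -> Q m.
Proof. by move=> h; apply: supp_sumX => t tp _; apply: h. Qed.

Local Notation ii := (Complex (0:R) 1).

Definition Dop (p : P) : P := (ii *: 'X_iw) * p^`M(is_).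

Lemma DopE p : Dop p = \sum_(m <- msupp p)
   (ii * (p@_m * (m is_)%:R)) *: 'X_[U_(iw) + (m - U_(is_))].
Proof.
rewrite /Dop {1}(mpolyE p) raddf_sum mulr_sumr; apply: eq_bigr => m _.
rewrite /= mderivZ mderivX scalerA -scalerAl -scalerAr scalerA mpolyXD.
by [].
Qed.

Lemma Dop_P (Q : pred 'X_{1..3}) p :
  (forall m, m \in msupp p -> (0 < m is_)%N -> Q (U_(iw) + (m - U_(is_)))%MM) ->
  forall m, m \in msupp (Dop p) -> Q m.
Proof.
move=> h; rewrite DopE; apply: supp_sumX => t tp.
rewrite !mulf_eq0 negb_or negb_or => /and3P [_ _]; rewrite pnatr_eq0 -lt0n.
exact: h.
Qed.

Lemma DopD p q : Dop (p + q) = Dop p + Dop q.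
Proof. by rewrite /Dop mderivD mulrDr. Qed.

Lemma DopZ c p : Dop (c *: p) = c *: Dop p.
Proof. by rewrite /Dop mderivZ scalerAr. Qed.

Lemma mnm_tst (m : 'X_{1..3}) : (m + U_(iwb))%MM iwb = (m iwb).+1 /\ (m + U_(iwb))%MM iw = m iw
  /\ (U_(iw) + (m - U_(is_)))%MM is_ = (m is_).-1.
Proof.
rewrite !mnmDE !mnmBE !mnm1E /=.
split; first by rewrite addn1.
split; first by rewrite addn0.
by rewrite add0n subn1.
Qed.


Lemma Aop_deriv p : (Aop p)^`M(iwb) = p.
Proof.
rewrite /Aop /linm raddf_sum [RHS]mpolyE; apply: eq_bigr => m _ /=.
rewrite /AF mderivZ mderivX addmK scalerA mnmDE mnm1E /= addn1 divfK //.
by rewrite pnatr_eq0.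
Qed.

Definition wdeg (m : 'X_{1..3}) := (m iwb + m iw + 2 * m is_)%N.

Lemma whomog0 j : @whomog R j (0 : P).
Proof. by move=> m; rewrite msupp0. Qed.

Lemma whomogD j p q : @whomog R j p -> @whomog R j q -> @whomog R j (p + q).
Proof. by move=> hp hq m /msuppD_le; rewrite mem_cat => /orP [/hp|/hq]. Qed.

Lemma whomogZ j c p : @whomog R j p -> @whomog R j (c *: p).
Proof. by move=> hp m /msuppZ_le /hp. Qed.

Lemma whomogN j p : @whomog R j p -> @whomog R j (- p).
Proof. by move=> hp; rewrite -scaleN1r; apply: whomogZ. Qed.

Lemma whomog_sum j (I : Type) (r : seq I) (F : I -> P) :
  (forall i, @whomog R j (F i)) -> @whomog R j (\sum_(i <- r) F i).
Proof.
move=> h; elim: r => [|x r ih]; first by rewrite big_nil; apply: whomog0.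
by rewrite big_cons; apply: whomogD.
Qed.

Lemma Aop_homog j p : @whomog R j p -> @whomog R j.+1 (Aop p).
Proof.
move=> hp m mA; apply/eqP; move: m mA; apply: Aop_P => m /hp.
rewrite !mnmDE !mnm1E /= => <-; apply/eqP; lia.
Qed.

Lemma Dop_homog j p : @whomog R j.+1 p -> @whomog R j (Dop p).
Proof.
move=> hp m mA; apply/eqP; move: m mA; apply: Dop_P => m /hp.
rewrite !mnmDE !mnmBE !mnm1E /= => h1 h2; apply/eqP; lia.
Qed.

Definition DA (p : P) : P := Dop (Aop p).

Lemma DA_homog j p : @whomog R j p -> @whomog R j (DA p).
Proof. by move=> h; apply: Dop_homog; apply: Aop_homog. Qed.

Lemma iterDA_homog j n p : @whomog R j p -> @whomog R j (iter n DA p).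
Proof. by move=> h; elim: n => //= n ih; apply: DA_homog. Qed.

Definition sbound j (p : P) := forall m, m \in msupp p -> (m is_ < j)%N.

Lemma DA_sbound j p : sbound j.+1 p -> sbound j (DA p).
Proof.
move=> hp m mA; move: m mA; apply: Dop_P => m.
move=> mA; apply/implyP; move: m mA; apply: Aop_P => m /hp.
rewrite !mnmDE !mnmBE !mnm1E /= => h; apply/implyP => h2; rewrite !mnmDE !mnm1E /=; lia.
Qed.

Lemma sbound0 p : sbound 0 p -> p = 0.
Proof.
move=> hp; apply: msuppnil0; case E: (msupp p) => [//|m s].
by have := hp m; rewrite E inE eqxx => /(_ isT).
Qed.

Lemma iterDA_sbound n j p : sbound (n + j) p -> sbound j (iter n DA p).
Proof.
elim: n j => [//|n ih] j h /=.
by apply: DA_sbound; apply: ih; rewrite -addSnnS.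
Qed.


Local Notation c2 := ((Num.sqrt (2:R))%:C%C).

Definition q0 k (p : P) : P := \sum_(n < k.+1) Aop (iter n DA (c2 *: p)).

Lemma Zbar_eq (q : P) : Zbar q = ((Num.sqrt (2:R))^-1)%:C%C *: (q^`M(iwb) - Dop q).
Proof. by []. Qed.

Lemma c2K (p : P) : ((Num.sqrt (2:R))^-1)%:C%C *: (c2 *: p) = p.
Proof.
rewrite scalerA -rmorphM mulVf ?scale1r //.
by rewrite gt_eqF // sqrtr_gt0 ltr0n.
Qed.

Lemma q0_Zbar k p : @whomog R k p -> Zbar (q0 k p) = p.
Proof.
move=> hp; set y := c2 *: p.
have hy : sbound (k.+1 + 0) y.
  move=> m /msuppZ_le /hp; rewrite addn0 => h; lia.
have y0 : DA (iter k DA y) = 0 by apply: sbound0; exact: (iterDA_sbound hy).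
rewrite Zbar_eq /q0 raddf_sum /=.
rewrite (eq_bigr (fun n : 'I_k.+1 => iter n DA y)); last by move=> n _; exact: Aop_deriv.
have -> : Dop (\sum_(n < k.+1) Aop (iter n DA y)) = \sum_(n < k.+1) iter n.+1 DA y.
  by rewrite /Dop raddf_sum mulr_sumr.
rewrite big_ord_recl big_ord_recr /=.
under eq_bigr do rewrite add0n.
rewrite y0 addr0 addrK.
exact: c2K.
Qed.

Lemma q0_homog k p : @whomog R k p -> @whomog R k.+1 (q0 k p).
Proof.
move=> hp; apply: whomog_sum => n; apply: Aop_homog; apply: iterDA_homog.
exact: whomogZ.
Qed.

Lemma iterDA_D n p q : iter n DA (p + q) = iter n DA p + iter n DA q.
Proof. by elim: n => //= n ->; rewrite /DA AopD DopD. Qed.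

Lemma iterDA_Z n c p : iter n DA (c *: p) = c *: iter n DA p.
Proof. by elim: n => //= n ->; rewrite /DA AopZ DopZ. Qed.

Lemma q0D k p q : q0 k (p + q) = q0 k p + q0 k q.
Proof.
by rewrite /q0 -big_split; apply: eq_bigr => n _; rewrite scalerDr iterDA_D AopD.
Qed.

Lemma q0Z k c p : q0 k (c *: p) = c *: q0 k p.
Proof.
rewrite /q0 scaler_sumr; apply: eq_bigr => n _.
by rewrite scalerA mulrC -scalerA iterDA_Z AopZ.
Qed.


Lemma mderivXU (i j : 'I_3) : ('X_i : P)^`M(j) = (i == j)%:R.
Proof.
rewrite mderivX mnm1E; case: eqP => [->|_]; last by rewrite scale0r.
have -> : (U_(j) - U_(j))%MM = 0%MM by apply/mnmP => l; rewrite mnmBE mnm0E subnn.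
by rewrite mpolyX0 scale1r.
Qed.

Definition Eop (q : P) : P := q^`M(iwb) - Dop q.

Lemma EopM p q : Eop (p * q) = Eop p * q + p * Eop q.
Proof. rewrite /Eop /Dop !mderivM; ring. Qed.

Definition Zs : P := 'X_is_ + ii *: ('X_iw * 'X_iwb).
Definition W g : P := 'X_iw * Zs ^+ g.

Lemma EopX1 : Eop 'X_iw = 0.
Proof. by rewrite /Eop /Dop !mderivXU /= mulr0 subr0. Qed.

Lemma EopZs : Eop Zs = 0.
Proof.
rewrite /Eop /Dop /Zs !mderivD !mderivZ !mderivM !mderivXU /=.
rewrite ?mulr0 ?mul0r ?add0r ?addr0 ?scaler0 ?addr0 ?mulr1.
by rewrite subrr.
Qed.

Lemma EopW g : Eop (W g) = 0.
Proof.
rewrite /W EopM EopX1 mul0r add0r.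
suff -> : Eop (Zs ^+ g) = 0 by rewrite mulr0.
elim: g => [|g ih]; first by rewrite expr0 /Eop /Dop !mderivC mulr0 subr0.
by rewrite exprS EopM EopZs ih mul0r mulr0 addr0.
Qed.

Lemma ZbarZ c (q : P) : @Zbar R (c *: q) = c *: Zbar q.
Proof. by rewrite !Zbar_eq mderivZ DopZ -scalerBr !scalerA mulrC. Qed.

Lemma ZbarD (p q : P) : @Zbar R (p + q) = Zbar p + Zbar q.
Proof. by rewrite !Zbar_eq mderivD DopD opprD addrACA scalerDr. Qed.

Lemma ZbarW g : @Zbar R (W g) = 0.
Proof. by rewrite Zbar_eq -/(Eop _) EopW scaler0. Qed.


Lemma whomogM a b p q : @whomog R a p -> @whomog R b q -> @whomog R (a + b) (p * q).
Proof.
move=> hp hq m /msuppM_le /allpairsP [[m1 m2] /= [/hp h1 /hq h2 ->]].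
rewrite !mnmDE -h1 -h2; lia.
Qed.

Lemma whomog_cX j c m : (c != 0 -> wdeg m = j) -> @whomog R j (c *: 'X_[m]).
Proof.
have [->|nz] := eqVneq c 0; first by rewrite scale0r => _; apply: whomog0.
by move=> /(_ isT) h m'; rewrite msuppMCX // mem_seq1 => /eqP ->.
Qed.

Lemma whomogX j m : wdeg m = j -> @whomog R j ('X_[m] : P).
Proof. by move=> h; rewrite -[X in whomog _ X]scale1r; apply: whomog_cX. Qed.

Lemma whomogZs : @whomog R 2 Zs.
Proof.
apply: whomogD; first by apply: whomogX; rewrite /wdeg !mnm1E.
apply: whomogZ; apply: (@whomogM 1 1); apply: whomogX; by rewrite /wdeg !mnm1E.
Qed.

Lemma whomogW g : @whomog R (2 * g).+1 (W g).
Proof.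
rewrite -add1n; apply: whomogM; first by apply: whomogX; rewrite /wdeg !mnm1E.
elim: g => [|g ih]; first by rewrite expr0 -mpolyX0; apply: whomogX; rewrite /wdeg !mnm0E.
by rewrite exprS mulnS; apply: whomogM => //; exact: whomogZs.
Qed.

Definition ms k : 'X_{1..3} := (U_(is_) *+ k./2)%MM.

Definition corr k (p : P) : P := (- conjc (c2 * p@_(ms k))) *: W k./2.

Lemma corr_homog k p : @whomog R k p -> @whomog R k.+1 (corr k p).
Proof.
move=> hp; rewrite /corr.
have [h0|nz] := eqVneq (p@_(ms k)) 0.
  by rewrite h0 mulr0 conjc0 oppr0 scale0r; apply: whomog0.
have : ms k \in msupp p by rewrite mcoeff_msupp.
move=> /hp; rewrite !mulmnE !mnm1E /= !mul0n !add0n mul1n => hk.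
have -> : k.+1 = (2 * k./2).+1 by rewrite hk.
apply: whomogZ; exact: whomogW.
Qed.

Lemma corrD k p q : corr k (p + q) = corr k p + corr k q.
Proof. by rewrite /corr mcoeffD mulrDr rmorphD opprD scalerDl. Qed.

Lemma corrZ k (r : R) p : corr k (r%:C%C *: p) = r%:C%C *: corr k p.
Proof.
rewrite /corr mcoeffZ mulrCA rmorphM /=.
have -> : (r -i* 0)%C = r%:C%C by rewrite oppr0.
by rewrite scalerA mulrN.
Qed.

Lemma Zbar_corr k p : @Zbar R (corr k p) = 0.
Proof. by rewrite /corr ZbarZ ZbarW scaler0. Qed.


Definition good (q : P) := forall m, m \in msupp q -> (2 <= m iwb + m iw)%N.

Lemma good0 : good 0.
Proof. by move=> m; rewrite msupp0. Qed.

Lemma goodD p q : good p -> good q -> good (p + q).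
Proof. by move=> hp hq m /msuppD_le; rewrite mem_cat => /orP [/hp|/hq]. Qed.

Lemma goodZ c p : good p -> good (c *: p).
Proof. by move=> hp m /msuppZ_le /hp. Qed.

Lemma good_sum (I : Type) (r : seq I) (F : I -> P) :
  (forall i, good (F i)) -> good (\sum_(i <- r) F i).
Proof.
move=> h; elim: r => [|x r ih]; first by rewrite big_nil; apply: good0.
by rewrite big_cons; apply: goodD.
Qed.

Lemma goodMl p q : good q -> good (p * q).
Proof.
move=> hq m /msuppM_le /allpairsP [[m1 m2] /= [_ /hq h2 ->]].
rewrite !mnmDE; lia.
Qed.

Lemma Aop_good1 x : (forall m, m \in msupp x -> (1 <= m iwb + m iw)%N) -> good (Aop x).
Proof.
move=> hx m mA; move: m mA; apply: Aop_P => m /hx.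
rewrite !mnmDE !mnm1E /= => h; by rewrite addn0 addnAC addn1 ltnS.
Qed.

Lemma Aop_Dop_good z : good (Aop (Dop z)).
Proof.
apply: Aop_good1 => m mA; move: m mA.
apply: (@Dop_P (fun m => 1 <= m iwb + m iw)%N) => m _ _ /=.
by rewrite !mnmDE !mnmBE !mnm1E /=; lia.
Qed.

Lemma good_Zs g : good (Zs ^+ g - 'X_is_ ^+ g).
Proof.
elim: g => [|g ih]; first by rewrite !expr0 subrr; apply: good0.
have -> : Zs ^+ g.+1 - 'X_is_ ^+ g.+1 =
   Zs * (Zs ^+ g - 'X_is_ ^+ g) + 'X_is_ ^+ g * (ii *: ('X_iw * 'X_iwb)).
  by rewrite !exprS /Zs; ring.
apply: goodD; first exact: goodMl.
apply: goodMl; apply: goodZ; rewrite -mpolyXD => m; rewrite msuppX mem_seq1 => /eqP ->.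
by rewrite !mnmDE !mnm1E.
Qed.

Lemma AopX m : Aop 'X_[m] = ((m iwb).+1%:R)^-1 *: 'X_[m + U_(iwb)].
Proof. by rewrite /Aop /linm msuppX big_seq1 mcoeffX eqxx /AF mul1r. Qed.


Lemma ord3 (l : 'I_3) : l = iwb \/ l = iw \/ l = is_.
Proof.
case: l => [[|[|[|l]]] hl]; [left|right;left|right;right|by []]; exact: val_inj.
Qed.

Lemma L_decomp k p : @whomog R k p -> exists G, good G /\ @whomog R k.+1 G /\
   q0 k p + corr k p = G + ((c2 * p@_(ms k)) *: 'X_[ms k + U_(iwb)]
        - conjc (c2 * p@_(ms k)) *: 'X_[U_(iw) + ms k]).
Proof.
move=> hp; set c := c2 * p@_(ms k); set y := c2 *: p.
set r := y - c *: 'X_[ms k].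
have hr : forall m, m \in msupp r -> (1 <= m iwb + m iw)%N.
  move=> m; rewrite mcoeff_msupp /r mcoeffB !mcoeffZ mcoeffX.
  have [<-|ne] := eqVneq (ms k) m; first by rewrite mulr1 subrr eqxx.
  rewrite mulr0 subr0 => nz.
  have : m \in msupp p by rewrite mcoeff_msupp; apply: contraNneq nz => ->; rewrite mulr0.
  move=> /hp hw; rewrite lt0n; apply/negP => /eqP h0; apply: (negP ne); apply/eqP.
  move: h0 => /eqP; rewrite addn_eq0 => /andP [/eqP h1 /eqP h2].
  move: hw; rewrite h1 h2 add0n => hw.
  apply/mnmP => l; rewrite mulmnE mnm1E.
  case: (ord3 l) => [->|[->|->]]; rewrite /= ?h1 ?h2 //.
  by rewrite -hw add0n mul1n mul2n doubleK.
set G := Aop r + \sum_(i < k) Aop (Dop (Aop (iter i DA y)))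
   + (- conjc c) *: ('X_iw * (Zs ^+ k./2 - 'X_is_ ^+ k./2)).
have eq : q0 k p + corr k p = G + (c *: 'X_[ms k + U_(iwb)]
        - conjc c *: 'X_[U_(iw) + ms k]).
  rewrite /q0 big_ord_recl /= -/y.
  have -> : y = c *: 'X_[ms k] + r by rewrite /r addrC subrK.
  rewrite AopD AopZ AopX mulmnE mnm1E /= mul0n invr1 scale1r.
  rewrite /corr -/c /W.
  have -> : ('X_iw * Zs ^+ k./2 : P) = 'X_iw * (Zs ^+ k./2 - 'X_is_ ^+ k./2) + 'X_[U_(iw) + ms k].
    by rewrite mpolyXD /ms -mpolyXn mulrBr subrK.
  rewrite /G scalerDr !scaleNr.
  have -> : \sum_(i < k) Aop (iter (bump 0 i) DA (c *: 'X_[ms k] + r)) =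
            \sum_(i < k) Aop (Dop (Aop (iter i DA y))).
    by apply: eq_bigr => i _; rewrite /y /r addrC subrK.
  set a := Aop r; set b := \sum_(i < k) _; set t := 'X_iw * _.
  set u := 'X_[_ + U_(iwb)]; set v := 'X_[U_(iw) + _].
  ring.
exists G; split.
  apply: goodD; first apply: goodD.
  - exact: Aop_good1.
  - by apply: good_sum => i; apply: Aop_Dop_good.
  - by apply: goodZ; apply: goodMl; apply: good_Zs.
split => //.
have -> : G = q0 k p + corr k p - (c *: 'X_[ms k + U_(iwb)]
        - conjc c *: 'X_[U_(iw) + ms k]) by rewrite eq addrK.
have hc : c != 0 -> wdeg (ms k) = k.
  move=> nz; apply: hp; rewrite mcoeff_msupp; apply: contraNneq nz => e.
  by rewrite /c e mulr0.
apply: whomogD; first by apply: whomogD; [apply: q0_homog | apply: corr_homog].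
apply: whomogN; apply: whomogD.
- apply: whomog_cX => /hc; rewrite /wdeg !mnmDE !mnm1E /= ; lia.
- apply: whomogN; apply: whomog_cX; rewrite conjc_eq0 => /hc.
  rewrite /wdeg !mnmDE !mnm1E /= ; lia.
Qed.


Local Notation nc := (@ComplexField.Normc.normc R).

Lemma nc_ge0 (x : C) : 0 <= nc x.
Proof. by case: x => a b; exact: sqrtr_ge0. Qed.

Lemma ncM (x y : C) : nc (x * y) = nc x * nc y.
Proof. exact: ComplexField.Normc.normcM. Qed.

Lemma ncX (x : C) n : nc (x ^+ n) = nc x ^+ n.
Proof.
elim: n => [|n ih]; first by rewrite !expr0 ComplexField.Normc.normc1.
by rewrite !exprS ncM ih.
Qed.

Lemma nc_conj (x : C) : nc (conjc x) = nc x.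
Proof. by case: x => a b /=; rewrite sqrrN. Qed.

Lemma nc_real (s : R) : nc (s%:C%C) = `|s|.
Proof. by rewrite /= expr0n /= addr0 sqrtr_sqr. Qed.

Lemma Re_le (z : C) : `|@complex.Re R z| <= nc z.
Proof.
case: z => a b /=; rewrite -sqrtr_sqr; apply: ler_wsqrtr.
by rewrite lerDl sqr_ge0.
Qed.

Lemma nc_sum (I : Type) (r : seq I) (F : I -> C) :
  nc (\sum_(i <- r) F i) <= \sum_(i <- r) nc (F i).
Proof.
elim: r => [|x r ih]; first by rewrite !big_nil ComplexField.Normc.normc0.
rewrite !big_cons; apply: le_trans (le_normcD _ _) _.
exact: lerD.
Qed.

Lemma ev_X m w s : ('X_[m] : P).@[ev w s] =
   conjc w ^+ (m iwb) * w ^+ (m iw) * (s%:C%C) ^+ (m is_).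
Proof.
rewrite mevalX !big_ord_recl big_ord0 mulr1 /ev /=.
have -> : (lift ord0 (lift ord0 ord0) : 'I_3) = is_ by apply: val_inj.
have -> : (lift ord0 ord0 : 'I_3) = iw by apply: val_inj.
have -> : (ord0 : 'I_3) = iwb by apply: val_inj.
by rewrite mulrA.
Qed.


Lemma mono_bound m w s k : (2 <= k)%N -> wdeg m = k.+1 -> (2 <= m iwb + m iw)%N ->
  nc w <= 1 -> `|s| <= 1 ->
  nc (('X_[m] : P).@[ev w s]) <= nc w ^+ 2 * (nc w + `|s|).
Proof.
move=> hk hw hg a1 b1.
rewrite ev_X !ncM !ncX nc_conj nc_real -exprD.
have a0 := nc_ge0 w; have b0 : 0 <= `|s| := normr_ge0 s.
set a := nc w; set b := `|s|; rewrite /wdeg in hw.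
case: (ltnP 2 (m iwb + m iw)) => h.
- apply: (@le_trans _ _ (a ^+ 3 * 1)).
    apply: ler_pM; rewrite ?exprn_ge0 //; last exact: exprn_ile1.
    exact: ler_wiXn2l.
  rewrite mulr1 exprS mulrC; apply: ler_wpM2l; first exact: exprn_ge0.
  by rewrite lerDl.
- have e : (m iwb + m iw = 2)%N by apply/eqP; rewrite eqn_leq h hg.
  have g1 : (0 < m is_)%N by lia.
  rewrite e; apply: ler_wpM2l; first exact: exprn_ge0.
  apply: le_trans (ler_iXnr g1 b0 b1) _.
  by rewrite lerDr.
Qed.

Lemma good_bound G k : (2 <= k)%N -> @whomog R k.+1 G -> good G ->
  exists C0 : R, forall w s, nc w + Num.sqrt `|s| <= 1 ->
    nc (G.@[ev w s]) <= C0 * nc w ^+ 2 * (nc w + `|s|).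
Proof.
move=> hk hG gG; exists (\sum_(m <- msupp G) nc G@_m) => w s hws.
have a1 : nc w <= 1 by apply: le_trans hws; rewrite lerDl sqrtr_ge0.
have b1 : `|s| <= 1.
  have : Num.sqrt `|s| <= 1 by apply: le_trans hws; rewrite lerDr nc_ge0.
  by rewrite -{1}sqrtr1 ler_sqrt.
rewrite mevalE.
under eq_bigr do rewrite -mevalX.
apply: le_trans; first by apply: nc_sum.
rewrite -mulrA mulr_suml big_seq [X in _ <= X]big_seq.
apply: ler_sum => m hm; rewrite ncM; apply: ler_wpM2l; first exact: nc_ge0.
apply: (@mono_bound m w s k) => //; [exact: hG | exact: gG].
Qed.


Lemma Re_subconj (z : C) : @complex.Re R (z - conjc z) = 0.
Proof. by case: z => a b /=; rewrite subrr. Qed.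

Lemma ReD (x y : C) : @complex.Re R (x + y) = @complex.Re R x + @complex.Re R y.
Proof. by case: x; case: y. Qed.

Lemma Re_special k c w s : @complex.Re R ((c *: 'X_[ms k + U_(iwb)]
     - conjc c *: 'X_[U_(iw) + ms k] : P).@[ev w s]) = 0.
Proof.
rewrite mevalB !mevalZ !ev_X !mnmDE !mulmnE !mnm1E /= ?mul0n ?muln0 ?mul1n ?addn0 ?add0n.
rewrite !expr0 !expr1 !mulr1 !mul1r.
suff -> : conjc c * (w * s%:C%C ^+ k./2) = conjc (c * (conjc w * s%:C%C ^+ k./2)).
  exact: Re_subconj.
have cM : forall x y : C, conjc (x * y) = conjc x * conjc y.
  by move=> [a b] [c' d] /=; congr Complex; ring.
have cX : forall (x : C) n, conjc (x ^+ n) = conjc x ^+ n.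
  move=> x; elim=> [|n ih]; first by rewrite !expr0 conjc1.
  by rewrite !exprS cM ih.
by rewrite !cM cX conjcK conjc_real.
Qed.

End S.

Unset Implicit Arguments.
Set Strict Implicit.

Theorem lemma8p3 (R : rcfType) (k : nat) : (2 <= k)%N ->
  exists L : pol3 R -> pol3 R,
    (forall p q : pol3 R, L (p + q) = L p + L q) /\
    (forall (r : R) (p : pol3 R), L (r%:C%C *: p) = r%:C%C *: L p) /\
    (forall p : pol3 R, whomog k p ->
       [/\ whomog k.+1 (L p),
           Zbar (L p) = p &
           exists C : R, forall (w : complex R) (s : R),
             cmod w + Num.sqrt `|s| <= 1 ->
             `|@complex.Re R ((L p).@[ev w s])| <= C * cmod w ^+ 2 * (cmod w + `|s|)]).
Proof.
move=> hk; exists (fun p => q0 k p + corr k p); split; [|split].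
- by move=> p q; rewrite q0D corrD addrACA.
- by move=> r p; rewrite q0Z corrZ scalerDr.
move=> p hp; split.
- by apply: whomogD; [exact: q0_homog | exact: corr_homog].
- by rewrite ZbarD q0_Zbar // Zbar_corr addr0.
have [G [gG [hG eq]]] := L_decomp hp.
have [C0 hC] := good_bound hk hG gG.
exists C0 => w s h.
rewrite eq mevalD ReD Re_special addr0.
apply: le_trans (Re_le _) _; exact: hC.
Qed.
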